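(* Consider noisy group testing under reverse $Z$-channel noise with parameter $\rho\in(0,1)$, $k=\Theta(p^\theta)$ defectives with $\theta\in(0,1)$, and i.i.d. Bernoulli testing with parameter $\nu>0$. Let the COMP decoder output $\hat S$ equal to the set of items that appear in no negative test. Then $P_e\to0$ as $p\to\infty$ whenever $n\ge n_{\rm COMP}(1+\eta)$ for an arbitrarily small fixed $\eta>0$, where $$n_{\rm COMP}=\frac{1}{(1-\rho)\nu e^{-\nu}}\,k\log p.$$
   Context: Setup: $p$ items, unknown defective set $S$ uniform among size-$k$ subsets of $\{1,\dots,p\}$, $p\to\infty$. Test matrix $\mathbf X\in\{0,1\}^{n\times p}$ with i.i.d. Bernoulli$(\nu/k)$ entries ($X_{ij}=1$ iff item $j$ is in test $i$). Noiseless outcome $U_i=\bigvee_{j\in S}X_{ij}$; observed outcome $Y_i$ obtained by passing $U_i$ independently through the reverse $Z$-channel: $P(Y=1|U=0)=\rho$, $P(Y=0|U=0)=1-\rho$, $P(Y=1|U=1)=1$. A test is negative if $Y_i=0$. $P_e=\mathbb P[\hat S\ne S]$. Natural logarithms. *)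

(* Defs.v *)
From HB Require Import structures.
From mathcomp Require Import all_boot all_order all_algebra.
From mathcomp Require Import all_classical all_reals all_analysis.
Set Implicit Arguments. Unset Strict Implicit. Unset Printing Implicit Defensive.
Import Order.TTheory GRing.Theory Num.Theory.
Local Open Scope ring_scope.

Section GT.
Variable R : realType.

(* Test matrix: X (i, j) = true iff item j is in test i. *)
Definition tmat (n p : nat) := {ffun 'I_n * 'I_p -> bool}.

Definition noiseless (n p : nat) (S : {set 'I_p}) (X : tmat n p) (i : 'I_n) : bool :=
  [exists j in S, X (i, j)].

Definition comp_decoder (n p : nat) (X : tmat n p) (Y : {ffun 'I_n -> bool})
  : {set 'I_p} :=
  [set j | [forall i : 'I_n, X (i, j) ==> Y i]].

Definition design_prob (n p : nat) (q : R) (X : tmat n p) : R :=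
  \prod_(ij : 'I_n * 'I_p) (if X ij then q else 1 - q).

Definition rz_channel (rho : R) (u y : bool) : R :=
  if u then (if y then 1 else 0) else (if y then rho else 1 - rho).

Definition channel_prob (n p : nat) (rho : R) (S : {set 'I_p}) (X : tmat n p)
  (Y : {ffun 'I_n -> bool}) : R :=
  \prod_(i : 'I_n) rz_channel rho (noiseless S X i) (Y i).

Definition ksubsets (p k : nat) : {set {set 'I_p}} := [set S : {set 'I_p} | #|S| == k].

Definition Pe_COMP (n p k : nat) (nu rho : R) : R :=
  \sum_(S in ksubsets p k) (#|ksubsets p k|%:R)^-1 *
    \sum_(X : tmat n p) design_prob (nu / k%:R) X *
      \sum_(Y : {ffun 'I_n -> bool}) channel_prob rho S X Y *
        (if comp_decoder X Y != S then 1 else 0).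

Definition n_COMP (p k : nat) (nu rho : R) : R :=
  (k%:R * ln (p%:R)) / ((1 - rho) * nu * expR (- nu)).

End GT.

(* Main.v *)
Require Import Defs.
From HB Require Import structures.
From mathcomp Require Import all_boot all_order all_algebra.
From mathcomp Require Import all_classical all_reals all_analysis.
From mathcomp Require Import ring lra.
Import Order.TTheory GRing.Theory Num.Theory numFieldNormedType.Exports.
Local Open Scope classical_set_scope.
Local Open Scope ring_scope.
Set Implicit Arguments. Unset Strict Implicit. Unset Printing Implicit Defensive.

Section P.
Variable R : realType.

Lemma ind_forall (I : finType) (P : pred I) :
  (if [forall i, P i] then 1 else 0 : R) = \prod_i (if P i then 1 else 0).
Proof.
case: forallP => [H|H].
  by rewrite big1 // => i _; rewrite H.
have /forallPn [i Hi] : ~~ [forall i, P i] by apply/forallP.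
by rewrite (bigD1 i) //= (negbTE Hi) mul0r.
Qed.

Definition uncurryX n p (F : {ffun 'I_n -> {ffun 'I_p -> bool}}) : tmat n p :=
  [ffun ij => F ij.1 ij.2].
Definition curryX n p (X : tmat n p) : {ffun 'I_n -> {ffun 'I_p -> bool}} :=
  [ffun i => [ffun j => X (i, j)]].

Lemma sum_tmat n p (G : tmat n p -> R) :
  \sum_X G X = \sum_F G (uncurryX F).
Proof.
rewrite (reindex (@uncurryX n p)) //.
exists (@curryX n p) => [F _|X _].
  by apply/ffunP => i; apply/ffunP => j; rewrite !ffunE.
by apply/ffunP => -[i j]; rewrite !ffunE.
Qed.

Definition w (q : R) (b : bool) := if b then q else 1 - q.

Lemma row_sum p (q : R) (S : {set 'I_p}) j0 : j0 \notin S ->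
  \sum_(r : {ffun 'I_p -> bool}) (\prod_j w q (r j)) *
     (if r j0 && ~~ [exists j in S, r j] then 1 else 0)
  = q * (1 - q) ^+ #|S|.
Proof.
move=> j0S.
pose c j (b : bool) : R :=
  if (if j == j0 then b else if j \in S then ~~ b else true) then 1 else 0.
transitivity (\sum_(r : {ffun 'I_p -> bool}) \prod_j (w q (r j) * c j (r j))).
  apply: eq_bigr => r _; rewrite big_split /=; congr (_ * _).
  rewrite -ind_forall; congr (if _ then _ else _).
  apply/idP/forallP.
    case/andP=> rj0 /existsPn H j.
    case: eqP => [->//|_]; case: ifP => // jS.
    by move: (H j); rewrite jS.
  move=> H; apply/andP; split; first by move: (H j0); rewrite eqxx.
  apply/existsPn => j; apply/negP => /andP[jS rj]; move: (H j).
  by case: eqP => [E|_]; [move: jS; rewrite E (negbTE j0S)|rewrite jS rj].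
rewrite -(bigA_distr_bigA (fun j (b : bool) => w q b * c j b)) /=.
rewrite (bigID (mem S)) /=.
rewrite (eq_bigr (fun _ => 1 - q)); last first.
  move=> j jS; rewrite big_bool /w /c /=.
  have -> : (j == j0) = false by apply/eqP => E; move: jS; rewrite E (negbTE j0S).
  by rewrite jS /=; ring.
rewrite prodr_const mulrC; congr (_ * _).
rewrite (bigD1 j0) //= [X in _ * X = _]big1 ?mulr1.
  by rewrite big_bool /w /c eqxx /=; ring.
move=> j /andP[jS jj0]; rewrite big_bool /w /c (negbTE jj0) (negbTE jS) /=; ring.
Qed.


Lemma sum_w p (q : R) : \sum_(r : {ffun 'I_p -> bool}) \prod_j w q (r j) = 1.
Proof.
rewrite -(bigA_distr_bigA (fun (j : 'I_p) (b : bool) => w q b)) /=.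
by rewrite big1 // => j _; rewrite big_bool /w /=; ring.
Qed.

Lemma row_sum2 p (q rho : R) (S : {set 'I_p}) j0 : j0 \notin S ->
  \sum_(r : {ffun 'I_p -> bool}) (\prod_j w q (r j)) *
     (if r j0 && ~~ [exists j in S, r j] then rho else 1)
  = 1 - (1 - rho) * q * (1 - q) ^+ #|S|.
Proof.
move=> j0S.
transitivity (\sum_(r : {ffun 'I_p -> bool}) ((\prod_j w q (r j)) -
   (1 - rho) * ((\prod_j w q (r j)) *
     (if r j0 && ~~ [exists j in S, r j] then 1 else 0)))).
  by apply: eq_bigr => r _; case: ifP => _; ring.
by rewrite sumrB -mulr_sumr sum_w row_sum // mulrA.
Qed.

Lemma sum_Y n p (rho : R) (S : {set 'I_p}) (X : tmat n p) j0 :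
  \sum_(Y : {ffun 'I_n -> bool}) channel_prob rho S X Y *
     (if j0 \in comp_decoder X Y then 1 else 0)
  = \prod_i (if X (i, j0) && ~~ noiseless S X i then rho else 1).
Proof.
transitivity (\sum_(Y : {ffun 'I_n -> bool}) \prod_i
   (rz_channel rho (noiseless S X i) (Y i) * (if X (i, j0) ==> Y i then 1 else 0))).
  apply: eq_bigr => Y _; rewrite big_split /= inE ind_forall //.
rewrite -(bigA_distr_bigA (fun i (y : bool) =>
   rz_channel rho (noiseless S X i) y * (if X (i, j0) ==> y then 1 else 0))) /=.
apply: eq_bigr => i _; rewrite big_bool /rz_channel.
by case: (noiseless S X i); case: (X (i, j0)) => /=; ring.
Qed.

Lemma key n p (q rho : R) (S : {set 'I_p}) j0 : j0 \notin S ->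
  \sum_(X : tmat n p) design_prob q X * \sum_(Y : {ffun 'I_n -> bool}) channel_prob rho S X Y *
     (if j0 \in comp_decoder X Y then 1 else 0)
  = (1 - (1 - rho) * q * (1 - q) ^+ #|S|) ^+ n.
Proof.
move=> j0S.
rewrite sum_tmat.
transitivity (\sum_(F : {ffun 'I_n -> {ffun 'I_p -> bool}}) \prod_i
   ((\prod_j w q (F i j)) * (if F i j0 && ~~ [exists j in S, F i j] then rho else 1))).
  apply: eq_bigr => F _; rewrite sum_Y big_split /=; congr (_ * _).
    by rewrite /design_prob pair_big /=; apply: eq_bigr => -[i j] _; rewrite ffunE.
  apply: eq_bigr => i _; rewrite /noiseless ffunE /=; congr (if _ && ~~ _ then _ else _).
  by apply: eq_existsb => j; rewrite ffunE.
rewrite -(bigA_distr_bigA (fun (i : 'I_n) (r : {ffun 'I_p -> bool}) =>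
   (\prod_j w q (r j)) * (if r j0 && ~~ [exists j in S, r j] then rho else 1))) /=.
by rewrite (eq_bigr (fun _ => 1 - (1 - rho) * q * (1 - q) ^+ #|S|)) ?prodr_const ?card_ord //
   => i _; rewrite row_sum2.
Qed.


Lemma w_ge0 (q : R) b : 0 <= q -> q <= 1 -> 0 <= w q b.
Proof. by move=> h0 h1; rewrite /w; case: b => //; rewrite subr_ge0. Qed.

Lemma dp_ge0 n p (q : R) (X : tmat n p) : 0 <= q -> q <= 1 -> 0 <= design_prob q X.
Proof.
move=> h0 h1; apply: prodr_ge0 => ij _.
by have := w_ge0 (X ij) h0 h1; rewrite /w.
Qed.

Lemma ch_ge0 n p (rho : R) S (X : tmat n p) Y : 0 <= rho -> rho <= 1 ->
  0 <= channel_prob rho S X Y.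
Proof.
move=> h0 h1; apply: prodr_ge0 => i _; rewrite /rz_channel.
by case: (noiseless S X i); case: (Y i) => //; rewrite subr_ge0.
Qed.

Lemma ch_subset n p (rho : R) S (X : tmat n p) Y :
  channel_prob rho S X Y != 0 -> S \subset comp_decoder X Y.
Proof.
move=> H; apply/fintype.subsetP => j jS; rewrite inE; apply/forallP => i; apply/implyP => Xij.
case: (boolP (Y i)) => // nY; exfalso; move/eqP: H; apply.
rewrite /channel_prob (bigD1 i) //= /rz_channel.
have -> : noiseless S X i by apply/existsP; exists j; rewrite jS Xij.
by rewrite (negbTE nY) mul0r.
Qed.

Lemma pw n p (rho : R) S (X : tmat n p) Y : 0 <= rho -> rho <= 1 ->
  channel_prob rho S X Y * (if comp_decoder X Y != S then 1 else 0) <=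
  \sum_(j in ~: S) channel_prob rho S X Y * (if j \in comp_decoder X Y then 1 else 0).
Proof.
move=> h0 h1.
have hs : 0 <= \sum_(j in ~: S) channel_prob rho S X Y * (if j \in comp_decoder X Y then 1 else 0 : R).
  by apply: sumr_ge0 => j _; apply: mulr_ge0; [exact: ch_ge0|case: ifP].
case: (eqVneq (channel_prob rho S X Y) 0) => [E|H]; first by rewrite {1}E mul0r.
case: (eqVneq (comp_decoder X Y) S) => [E|ne]; first by rewrite /= mulr0; apply: sumr_ge0 => j _; apply: mulr_ge0; [exact: ch_ge0|case: ifP].
rewrite /= mulr1.
have : ~~ (comp_decoder X Y \subset S).
  by apply: contra ne => sub; rewrite finset.eqEsubset sub (ch_subset H).
case/fintype.subsetPn => j jC jS.
rewrite (bigD1 j) /=; last by rewrite inE.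
rewrite jC mulr1 lerDl; apply: sumr_ge0 => i _; apply: mulr_ge0; [exact: ch_ge0|by case: ifP].
Qed.

Lemma inner_bound n p (q rho : R) (S : {set 'I_p}) :
  0 <= q -> q <= 1 -> 0 <= rho -> rho <= 1 ->
  \sum_(X : tmat n p) design_prob q X * \sum_(Y : {ffun 'I_n -> bool}) channel_prob rho S X Y *
     (if comp_decoder X Y != S then 1 else 0)
  <= p%:R * (1 - (1 - rho) * q * (1 - q) ^+ #|S|) ^+ n.
Proof.
move=> hq0 hq1 hr0 hr1.
apply: (@le_trans _ _ (\sum_(j in ~: S) \sum_(X : tmat n p) design_prob q X *
   \sum_(Y : {ffun 'I_n -> bool}) channel_prob rho S X Y *
     (if j \in comp_decoder X Y then 1 else 0))).
  rewrite exchange_big /=; apply: ler_sum => X _.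
  rewrite -mulr_sumr; apply: ler_wpM2l; first exact: dp_ge0.
  rewrite exchange_big /=; apply: ler_sum => Y _; exact: pw.
rewrite (eq_bigr (fun _ => (1 - (1 - rho) * q * (1 - q) ^+ #|S|) ^+ n)); last first.
  by move=> j; rewrite inE => jS; rewrite key.
rewrite sumr_const -[_ *+ #|~: S|]mulr_natl; apply: ler_wpM2r.
  apply: exprn_ge0; rewrite subr_ge0.
  apply: mulr_ile1; [apply: mulr_ge0; lra|apply: exprn_ge0; lra| |apply: exprn_ile1; lra].
  apply: mulr_ile1; lra.
by rewrite ler_nat; apply: leq_trans (max_card _) _; rewrite card_ord.
Qed.


Lemma inner_ge0 n p (q rho : R) (S : {set 'I_p}) :
  0 <= q -> q <= 1 -> 0 <= rho -> rho <= 1 ->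
  0 <= \sum_(X : tmat n p) design_prob q X * \sum_(Y : {ffun 'I_n -> bool}) channel_prob rho S X Y *
     (if comp_decoder X Y != S then 1 else 0).
Proof.
move=> hq0 hq1 hr0 hr1; apply: sumr_ge0 => X _; apply: mulr_ge0; first exact: dp_ge0.
by apply: sumr_ge0 => Y _; apply: mulr_ge0; [exact: ch_ge0|case: ifP].
Qed.

Lemma Pe_bound n p k (nu rho : R) :
  0 <= nu / k%:R -> nu / k%:R <= 1 -> 0 <= rho -> rho <= 1 ->
  0 <= Pe_COMP n p k nu rho /\
  Pe_COMP n p k nu rho <= p%:R * (1 - (1 - rho) * (nu / k%:R) * (1 - nu / k%:R) ^+ k) ^+ n.
Proof.
move=> hq0 hq1 hr0 hr1; rewrite /Pe_COMP; split.
  apply: sumr_ge0 => S _; apply: mulr_ge0; first by rewrite invr_ge0.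
  exact: inner_ge0.
set B := p%:R * _.
have hB : 0 <= B.
  apply: mulr_ge0 => //; apply: exprn_ge0; rewrite subr_ge0.
  apply: mulr_ile1; [apply: mulr_ge0; lra|apply: exprn_ge0; lra| |apply: exprn_ile1; lra].
  apply: mulr_ile1; lra.
apply: (@le_trans _ _ (\sum_(S in ksubsets p k) (#|ksubsets p k|%:R)^-1 * B)).
  apply: ler_sum => S; rewrite inE => /eqP cS.
  apply: ler_wpM2l; first by rewrite invr_ge0.
  by rewrite /B -cS; apply: inner_bound; rewrite ?cS.
clearbody B.
rewrite sumr_const.
have -> : forall (x y : R) m, x * y *+ m = (x *+ m) * y.
  by move=> x y m; rewrite mulrnAl.
case: (posnP #|ksubsets p k|) => [->|hc]; first by rewrite mulr0n mul0r.
by rewrite -(mulr_natr (#|ksubsets p k|%:R^-1)) mulVf ?mul1r // pnatr_eq0 -lt0n.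
Qed.

Lemma eqle (x y : R) : x = y -> x <= y. Proof. by move=> ->. Qed.

Lemma exp_lb (q : R) : 0 <= q -> q < 1 -> expR (- (q / (1 - q))) <= 1 - q.
Proof.
move=> h0 h1.
have hq : 0 < 1 - q by lra.
have h : (1 - q)^-1 <= expR (q / (1 - q)).
  by have := expR_ge1Dx (q / (1 - q)); congr (_ <= _); field; lra.
rewrite expRN -[X in _ <= X]invrK lef_pV2 //; rewrite ?posrE ?invr_gt0 ?expR_gt0 //.
Qed.

Lemma pow_lb (nu delta : R) (K : nat) : 0 < nu -> 0 < delta ->
  nu + nu ^+ 2 / delta + 1 <= K%:R -> 1 - delta <= (1 - nu / K%:R) ^+ K * expR nu.
Proof.
move=> hnu hd hK.
have hd2 : 0 <= nu ^+ 2 / delta by apply: divr_ge0; [exact: sqr_ge0|lra].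
have hKp : 0 < K%:R :> R by lra.
set q := nu / K%:R.
have hq0 : 0 <= q by apply: divr_ge0; lra.
have hq1 : q < 1 by rewrite /q ltr_pdivrMr //; lra.
have h1 : expR (- (q / (1 - q)) * K%:R) <= (1 - q) ^+ K.
  rewrite expRM_natr; apply: lerXn2r; rewrite ?nnegrE ?expR_ge0 //; last exact: exp_lb.
  lra.
apply: (@le_trans _ _ (expR (- (q / (1 - q)) * K%:R) * expR nu)); last first.
  by apply: ler_wpM2r => //; exact: expR_ge0.
rewrite -expRD.
have -> : - (q / (1 - q)) * K%:R + nu = - (nu ^+ 2 / (K%:R - nu)).
  have hKn : 0 < K%:R - nu by lra.
  by rewrite /q; field; rewrite (lt0r_neq0 hKn) (lt0r_neq0 hKp).
apply: le_trans (expR_ge1Dx _); rewrite lerD2l lerN2.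
rewrite ler_pdivrMr; last lra.
move: hd2; rewrite ler_pdivlMr // => _.
have : nu ^+ 2 / delta <= K%:R - nu - 1 by lra.
rewrite ler_pdivrMr //; nra.
Qed.


Lemma main_est (nu rho eta : R) (p K N : nat) : 0 < nu -> 0 < rho -> rho < 1 -> 0 < eta ->
  (1 <= p)%N ->
  nu + nu ^+ 2 / (eta / (2 * (1 + eta))) + 1 <= K%:R ->
  (1 + eta) * n_COMP p K nu rho <= N%:R ->
  p%:R * (1 - (1 - rho) * (nu / K%:R) * (1 - nu / K%:R) ^+ K) ^+ N
    <= expR (- (eta / 2 * ln p%:R)).
Proof.
move=> hnu hr0 hr1 heta hp hK hN.
set delta := eta / (2 * (1 + eta)) in hK.
have hd : 0 < delta by apply: divr_gt0; lra.
have hKp : 0 < K%:R :> R.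
  have : 0 <= nu ^+ 2 / delta by apply: divr_ge0; [exact: sqr_ge0|lra].
  lra.
have hpp : 0 < p%:R :> R by rewrite ltr0n.
have hl : 0 <= ln (p%:R : R) by apply: ln_ge0; rewrite ler1n.
set q := nu / K%:R.
have hq0 : 0 <= q by apply: divr_ge0; lra.
have hq1 : q < 1.
  rewrite /q ltr_pdivrMr //.
  have : 0 <= nu ^+ 2 / delta by apply: divr_ge0; [exact: sqr_ge0|lra].
  lra.
set Y := (1 - q) ^+ K.
have hY0 : 0 <= Y by apply: exprn_ge0; lra.
have hY1 : Y <= 1 by apply: exprn_ile1; lra.
have hYl : 1 - delta <= Y * expR nu by exact: pow_lb.
set a := (1 - rho) * q * Y.
have ha0 : 0 <= a by apply: mulr_ge0 => //; apply: mulr_ge0; lra.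
have ha1 : a <= 1 by apply: mulr_ile1 => //; [apply: mulr_ge0; lra| apply: mulr_ile1; lra].
have h1 : (1 - a) ^+ N <= expR (- a * N%:R).
  rewrite expRM_natr; apply: lerXn2r; rewrite ?nnegrE ?expR_ge0 //; first lra.
  by have := expR_ge1Dx (- a); rewrite addrC.
have h2 : a * N%:R >= (1 + eta) * ln p%:R * (Y * expR nu).
  apply: le_trans (ler_wpM2l ha0 hN).
  rewrite /a /n_COMP /q expRN.
  have hE : 0 < expR nu by exact: expR_gt0.
  have hr : 0 < 1 - rho by lra.
  apply: eqle; field.
  by rewrite (lt0r_neq0 hE) (lt0r_neq0 hnu) (lt0r_neq0 hKp) (lt0r_neq0 hr).
have h3 : (1 + eta) * ln p%:R * (Y * expR nu) >= (1 + eta / 2) * ln p%:R.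
  apply: le_trans (_ : (1 + eta) * ln p%:R * (1 - delta) <= _); last first.
    by apply: ler_wpM2l => //; apply: mulr_ge0 => //; lra.
  rewrite -mulrA mulrC [X in _ <= X]mulrC -mulrA; apply: ler_wpM2l => //.
  apply: eqle; rewrite /delta; field; lra.
apply: (@le_trans _ _ (p%:R * expR (- a * N%:R))).
  by apply: ler_wpM2l; lra.
rewrite -{1}(lnK hpp) -expRD ler_expR.
lra.
Qed.

End P.
Lemma ln_event (R : realType) (L : R) : exists N : nat, forall p : nat, (N <= p)%N -> L <= ln (p%:R : R).
Proof.
exists (Num.truncn (expR L)).+1 => p hp.
have h1 : expR L < p%:R.
  apply: lt_le_trans (truncnS_gt _) _; by rewrite ler_nat.
have h0 : 0 < (p%:R : R) by apply: lt_trans h1; exact: expR_gt0.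
by have := ltW h1; rewrite -ler_ln ?posrE ?expR_gt0 // expRK.
Qed.

Lemma test (R : realType) (f : nat -> R) : (forall e : R, 0 < e -> exists N, forall p, (N <= p)%N -> `|f p| <= e) -> f @ \oo --> 0.
Proof.
move=> H; apply/cvgrPdist_le => e he.
have [N HN] := H e he.
exists N => // p /= hp. rewrite sub0r normrN. exact: HN.
Qed.

Theorem lemma1 (R : realType) (rho nu theta eta : R)
  (k n : nat -> nat)
  (hrho0 : 0 < rho) (hrho1 : rho < 1)
  (htheta0 : 0 < theta) (htheta1 : theta < 1)
  (hnu : 0 < nu) (heta : 0 < eta)
  (hk : exists c1 c2 : R, 0 < c1 /\ 0 < c2 /\
          exists p0 : nat, forall p : nat, (p0 <= p)%N ->
            c1 * (p%:R `^ theta) <= (k p)%:R /\ (k p)%:R <= c2 * (p%:R `^ theta))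
  (hn : exists p0 : nat, forall p : nat, (p0 <= p)%N ->
          (1 + eta) * n_COMP p (k p) nu rho <= (n p)%:R) :
  (fun p : nat => Pe_COMP (n p) p (k p) nu rho) @ \oo --> (0 : R).
Proof.
have [c1 [c2 [hc1 [hc2 [p0 hk0]]]]] := hk.
have [p1 hn1] := hn.
apply: test => e he.
set delta := eta / (2 * (1 + eta)).
have hd : 0 < delta by apply: divr_gt0; lra.
set T := nu + nu ^+ 2 / delta + 1.
have hT : nu + 1 <= T.
  have : 0 <= nu ^+ 2 / delta by apply: divr_ge0; [exact: sqr_ge0|lra].
  rewrite /T; lra.
have [N1 HN1] := ln_event ((T / c1 - 1) / theta).
have [N2 HN2] := ln_event (- (2 / eta) * ln e).
exists (maxn (maxn p0 p1) (maxn (maxn N1 N2) 1)) => p hp.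
rewrite !geq_max in hp.
case/andP: hp => /andP[hp0 hp1] /andP[/andP[hpN1 hpN2] hp2].
have [hk1 _] := hk0 p hp0.
have hnp := hn1 p hp1.
have hpos : 0 < (p%:R : R) by rewrite ltr0n.
have hl1 := HN1 p hpN1.
have hl2 := HN2 p hpN2.
have hK : T <= (k p)%:R.
  apply: le_trans hk1.
  rewrite /powR (gt_eqF hpos).
  apply: le_trans (_ : c1 * (1 + theta * ln p%:R) <= _); last first.
    by apply: ler_wpM2l; [lra|rewrite mulrC; exact: expR_ge1Dx].
  rewrite -ler_pdivrMl //.
  move: hl1; rewrite ler_pdivrMr // => hl1.
  rewrite mulrC; lra.
have hkp : 0 < ((k p)%:R : R) by lra.
have hq0 : 0 <= nu / (k p)%:R by apply: divr_ge0; lra.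
have hq1 : nu / (k p)%:R <= 1 by rewrite ler_pdivrMr //; lra.
have [Pe0 Pe1] := Pe_bound (n p) p hq0 hq1 (ltW hrho0) (ltW hrho1).
rewrite ger0_norm //; apply: le_trans Pe1 _.
apply: le_trans (main_est hnu hrho0 hrho1 heta hp2 hK hnp) _.
rewrite -[X in _ <= X](lnK he) ler_expR.
have h : eta / 2 * (- (2 / eta) * ln e) <= eta / 2 * ln p%:R.
  by apply: ler_wpM2l => //; lra.
have E : eta / 2 * (- (2 / eta) * ln e) = - ln e by field; rewrite lt0r_neq0.
rewrite E in h; lra.
Qed.
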